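(* Let $K:[0,\infty)\to[0,\infty)$ satisfy: (AK1) $K$ is non-increasing and strictly positive on $[0,\infty)$; (AK2) $K(0)=1$ and $c_K\int_{\mathbb{R}^d}K(\|\mathbf{x}\|)\,d\mathbf{x}=1$ for some constant $c_K>0$; (AK3) there exist $A,\alpha>0$ with $K(x)/K(y)\le A\exp(-(x-y)^\alpha)$ for all $0\le y\le x$. For $\sigma>0$ let $K_\sigma(x)=K(x/\sigma)$. Let $\mathcal{X}=\{\mathbf{x}_1,\dots,\mathbf{x}_n\}\subset\mathbb{R}^d$ and suppose there is a partition of $\mathcal{X}$ into nonempty sets $\mathcal{C}_1,\dots,\mathcal{C}_k$ such that $\min_{m\in[k]}d(\mathcal{C}_m,\mathcal{X}\setminus\mathcal{C}_m)-\max_{l\in[k]}\delta_l=\delta>0$, where $\mathcal{C}_l$ is connected at distance $\delta_l$ for each $l\in[k]$. Let $\mathbf{U}$ have as columns the eigenvectors of the unnormalised Laplacian of the graph $(\mathcal{X},K_\sigma)$. Then, provided $0<\sigma<\delta\log(An^{z/3})^{-1/\alpha}$, where $z$ satisfies $n^{z-15}\ge81k^{15}$, we have $$\max_{\substack{i,j\in[n],l\in[k]:\\\mathbf{x}_i,\mathbf{x}_j\in\mathcal{C}_l}}\|\mathbf{U}_{i,1:k}-\mathbf{U}_{j,1:k}\|\le\left(\frac{k^3}{n^{z-9}}\right)^{1/6},\qquad \min_{\substack{i,j\in[n],l\in[k]:\\\mathbf{x}_i\in\mathcal{C}_l,\mathbf{x}_j\notin\mathcal{C}_l}}\|\mathb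f{U}_{i,1:k}-\mathbf{U}_{j,1:k}\|\ge\sqrt{\frac{2}{n}}-6\left(\frac{k^{27}}{n^{z-15}}\right)^{1/24}.$$
   Context: $[n]=\{1,\dots,n\}$; $\|\cdot\|$ is the Euclidean norm. For sets $S,U$, $d(S,U)=\inf_{\mathbf{x}\in S,\mathbf{y}\in U}\|\mathbf{x}-\mathbf{y}\|$. A set $S$ is connected at distance $\delta$ if there is no partition of $S$ into $S_1,S_2$ with $d(S_1,S_2)>\delta$. The graph $(\mathcal{X},K_\sigma)$ has affinity matrix $\mathbf{A}_{ij}=K_\sigma(\|\mathbf{x}_i-\mathbf{x}_j\|)$ (including $i=j$), degree matrix $\mathbf{D}=\mathrm{diag}(\sum_j\mathbf{A}_{ij})$, unnormalised Laplacian $\mathbf{D}-\mathbf{A}$. ''The eigenvectors'' means an orthonormal eigenbasis arranged as columns with eigenvalues in nondecreasing order; $\mathbf{U}_{i,1:k}$ is the first $k$ entries of row $i$. *)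

(* Defs.v *)
From HB Require Import structures.
From mathcomp Require Import all_boot all_order all_algebra.
From mathcomp Require Import all_classical all_reals all_analysis.
Set Implicit Arguments. Unset Strict Implicit. Unset Printing Implicit Defensive.
Import Order.TTheory GRing.Theory Num.Theory.
Local Open Scope ring_scope.

Section Defs.
Variable R : realType.

Definition enorm (d : nat) (v : 'rV[R]_d) : R :=
  Num.sqrt (\sum_(i < d) (v ord0 i) ^+ 2).

(* Iterated Lebesgue integral over R^d (Tonelli order: last coordinate outermost)
   of a function of d real coordinates (coordinates i < d of a nat-indexed vector). *)
Fixpoint iter_integral (d : nat) (g : (nat -> R) -> \bar R) : \bar R :=
  match d with
  | 0 => g (fun _ => 0)
  | m.+1 => (\int[@lebesgue_measure R]_(t in [set: R])
               iter_integral m (fun v => g (fun i => if i == m then t else v i)))%E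
  end.

Definition radial_integral (d : nat) (K : R -> R) : \bar R :=
  iter_integral d (fun v => (K (enorm (\row_(i < d) v i)))%:E).

Definition AK1 (K : R -> R) : Prop :=
  (forall x y, 0 <= x -> x <= y -> K y <= K x) /\ (forall x, 0 <= x -> 0 < K x).
Definition AK2 (d : nat) (K : R -> R) : Prop :=
  K 0 = 1 /\ exists cK : R, 0 < cK /\ (cK%:E * radial_integral d K)%E = 1%E.
Definition AK3 (K : R -> R) (A alpha : R) : Prop :=
  0 < A /\ 0 < alpha /\
  forall x y, 0 <= y -> y <= x -> K x / K y <= A * expR (- ((x - y) `^ alpha)).

Variables (n d : nat) (x : 'I_n -> 'rV[R]_d).

(* d(S,U) = inf_{x in S, y in U} ||x - y|| for sets of indices of points;
   +oo when one of them is empty *)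
Definition set_dist (S U : {set 'I_n}) : \bar R :=
  ereal_inf [set (enorm (x i - x j))%:E | i in [set i | i \in S] & j in [set j | j \in U]].

Definition connected_at (S : {set 'I_n}) (delta : R) : Prop :=
  ~ exists S1 S2 : {set 'I_n},
      [/\ S1 != finset.set0, S2 != finset.set0, S1 :|: S2 = S, S1 :&: S2 = finset.set0
        & (delta%:E < set_dist S1 S2)%E].

Definition affinity (K : R -> R) (sigma : R) : 'M[R]_n :=
  \matrix_(i, j) K (enorm (x i - x j) / sigma).
Definition degree_mx (K : R -> R) (sigma : R) : 'M[R]_n :=
  diag_mx (\row_i \sum_j affinity K sigma i j).
Definition laplacian (K : R -> R) (sigma : R) : 'M[R]_n :=
  degree_mx K sigma - affinity K sigma.

Definition eigvec_matrix (L U : 'M[R]_n) : Prop :=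
  exists ev : 'rV[R]_n,
    [/\ U^T *m U = 1%:M, L *m U = U *m diag_mx ev
      & forall i j : 'I_n, (i <= j)%N -> ev ord0 i <= ev ord0 j].

Definition row_dist (U : 'M[R]_n) (k : nat) (i j : 'I_n) : R :=
  Num.sqrt (\sum_(c < n | (c < k)%N) (U i c - U j c) ^+ 2).

End Defs.

(* Main.v *)
Require Import Defs.
From HB Require Import structures.
From mathcomp Require Import all_boot all_order all_algebra.
From mathcomp Require Import all_classical all_reals all_analysis.
From mathcomp Require Import ring lra zify.
Import Order.TTheory GRing.Theory Num.Theory.
Local Open Scope ring_scope.

Section Gen.
Variable R : realType.

Lemma sum_cst_ord n (S : R) : \sum_(j < n) S = n%:R * S.
Proof. by rewrite big_const_ord iter_addr addr0 mulr_natl. Qed.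

Lemma cs_ineq (I : finType) (a b : I -> R) :
  (\sum_i a i * b i) ^+ 2 <= (\sum_i a i ^+ 2) * (\sum_i b i ^+ 2).
Proof.
have H0 : 0 <= \sum_p \sum_q (a p * b q - a q * b p) ^+ 2.
  by apply: sumr_ge0 => p _; apply: sumr_ge0 => q _; apply: sqr_ge0.
have E : \sum_p \sum_q (a p * b q - a q * b p) ^+ 2 =
   \sum_p \sum_q (a p ^+ 2 * b q ^+ 2) + \sum_p \sum_q (a q ^+ 2 * b p ^+ 2)
   - 2 * \sum_p \sum_q ((a p * b p) * (a q * b q)).
  rewrite -!big_split /= mulr_sumr -sumrB; apply: eq_bigr => p _.
  rewrite -big_split /= mulr_sumr -sumrB; apply: eq_bigr => q _.
  ring.
have E2 : \sum_p \sum_q (a q ^+ 2 * b p ^+ 2) = \sum_p \sum_q (a p ^+ 2 * b q ^+ 2).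
  rewrite exchange_big /=; done.
move: H0; rewrite E E2 -!big_distrlr /= expr2 => H.
rewrite mulrC; lra.
Qed.

Lemma exists_ker (p q : nat) (B : 'M[R]_(p, q)) : (q < p)%N ->
  exists a : 'rV[R]_p, a != 0 /\ a *m B = 0.
Proof.
move=> hqp.
have hnf : ~~ row_free B.
  rewrite /row_free; apply/negP => /eqP h.
  by move: (rank_leq_col B); rewrite h leqNgt hqp.
move: hnf; rewrite -kermx_eq0 => hk.
have [i hi] : exists i, row i (kermx B) != 0.
  case: (boolP [exists i, row i (kermx B) != 0]) => [/existsP [i hi]|]; first by exists i.
  rewrite negb_exists => /forallP h; exfalso; move/negP: hk; apply.
  apply/eqP/row_matrixP => i; rewrite row0; apply/eqP; move: (h i); by rewrite negbK.
exists (row i (kermx B)); split => //.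
by rewrite -row_mul mulmx_ker row0.
Qed.

Lemma two_terms_le (n : nat) (T : 'I_n -> 'I_n -> R) p q :
  (forall i j, 0 <= T i j) -> p != q ->
  T p q + T q p <= \sum_i \sum_j T i j.
Proof.
move=> T0 pq.
rewrite (bigD1 p) //= [\sum_(i | i != p) _](bigD1 q) /=; last by rewrite eq_sym.
have h1 : T p q <= \sum_j T p j.
  by rewrite (bigD1 q) //= lerDl; apply: sumr_ge0 => *.
have h2 : T q p <= \sum_j T q j.
  by rewrite (bigD1 p) //= lerDl; apply: sumr_ge0 => *.
have h3 : 0 <= \sum_(i | (i != p) && (i != q)) \sum_j T i j.
  by apply: sumr_ge0 => i _; apply: sumr_ge0 => *.
lra.
Qed.

Lemma one_term_le (I J : finType) (T : I -> J -> R) p q :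
  (forall i j, 0 <= T i j) -> T p q <= \sum_i \sum_j T i j.
Proof.
move=> T0.
rewrite (bigD1 p) //= (bigD1 q) //=.
have h1 : 0 <= \sum_(j | j != q) T p j by apply: sumr_ge0 => *.
have h3 : 0 <= \sum_(i | i != p) \sum_j T i j.
  by apply: sumr_ge0 => i _; apply: sumr_ge0 => *.
lra.
Qed.

Lemma path_bound (n : nat) (C : {set 'I_n}) (E : 'I_n -> 'I_n -> Prop)
  (f : 'I_n -> R) (eta : R) :
  0 <= eta ->
  (forall S : {set 'I_n}, S \subset C -> S != finset.set0 -> S != C ->
     exists p q, [/\ p \in S, q \in C, q \notin S & E p q]) ->
  (forall p q, p \in C -> q \in C -> E p q -> `|f p - f q| <= eta) ->
  forall i j, i \in C -> j \in C -> `|f i - f j| <= (#|C|.-1)%:R * eta.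
Proof.
move=> eta0 conn hE i j iC jC.
pose S m := [set p in C | `|f p - f i| <= m%:R * eta].
have SC m : S m \subset C by apply/fintype.subsetP => p; rewrite inE => /andP[].
have Smono m : S m \subset S m.+1.
  apply/fintype.subsetP => p; rewrite !inE => /andP[-> h] /=.
  apply: (le_trans h); apply: ler_wpM2r => //; by rewrite ler_nat.
have key m : (minn m.+1 #|C| <= #|S m|)%N.
  elim: m => [|m IH].
    have : i \in S 0 by rewrite inE iC subrr normr0 mul0r lexx.
    move=> iS; rewrite (leq_trans (geq_minl _ _)) //.
    by rewrite card_gt0; apply/set0Pn; exists i.
  have [eqSC|neSC] := eqVneq (S m) C.
    rewrite (leq_trans (geq_minr _ _)) // -{1}eqSC.
    exact: subset_leq_card.
  have ne0 : S m != finset.set0.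
    apply/set0Pn; exists i; rewrite inE iC subrr normr0 /=.
    by apply: mulr_ge0 => //.
  have [p [q [pS qC qS Epq]]] := conn _ (SC m) ne0 neSC.
  have qS1 : q \in S m.+1.
    rewrite inE qC /=.
    move: pS; rewrite inE => /andP[pC hp].
    have hpq : `|f q - f p| <= eta by rewrite distrC; exact: hE _ _ pC qC Epq.
    have htri : `|f q - f i| <= `|f q - f p| + `|f p - f i|.
      by rewrite -[f q - f i](subrKA (f p)) ler_normD.
    have -> : (m.+1)%:R * eta = eta + m%:R * eta by rewrite -addn1 natrD; ring.
    lra.
  have prop : S m \proper S m.+1.
    by rewrite properE Smono /=; apply/fintype.subsetPn; exists q.
  have := proper_card prop.
  move=> hc; move: IH hc; lia.
have hCpos : (0 < #|C|)%N by rewrite card_gt0; apply/set0Pn; exists i.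
have := key (#|C|.-1); rewrite prednK // minnn => hc.
have eqS : S (#|C|.-1) = C.
  by apply/eqP; rewrite eqEcard SC hc.
have : j \in S (#|C|.-1) by rewrite eqS.
by rewrite inE => /andP[_ h]; rewrite distrC.
Qed.
End Gen.


Section SD.
Variables (R : realType) (n d : nat) (x : 'I_n -> 'rV[R]_d).

Lemma set_dist_le (S1 S2 : {set 'I_n}) p q : p \in S1 -> q \in S2 ->
  (set_dist x S1 S2 <= (enorm (x p - x q))%:E)%E.
Proof.
move=> pS qS; apply: ereal_inf_lbound.
by exists p; rewrite /= ?inE //; exists q; rewrite /= ?inE.
Qed.

Lemma set_dist_ge0 (S1 S2 : {set 'I_n}) : (0 <= set_dist x S1 S2)%E.
Proof.
apply: le_ereal_inf_tmp => y [p _ [q _ <-]].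
by rewrite lee_fin /enorm sqrtr_ge0.
Qed.

Lemma set_dist_gt (S1 S2 : {set 'I_n}) (e : R) :
  (forall p q, p \in S1 -> q \in S2 -> e < enorm (x p - x q)) ->
  (e%:E < set_dist x S1 S2)%E.
Proof.
move=> h.
pose M := (\big[Order.min/+oo%E]_(p | p \in S1)
            \big[Order.min/+oo%E]_(q | q \in S2) (enorm (x p - x q))%:E)%E.
have eM : (e%:E < M)%E.
  apply: lt_bigmin; first exact: ltry.
  move=> p pS; apply: lt_bigmin; first exact: ltry.
  by move=> q qS; rewrite lte_fin; apply: h.
apply: (lt_le_trans eM); apply: le_ereal_inf_tmp => y [p /= pS [q /= qS <-]].
move: pS qS => /= pS qS.
apply: le_trans (bigmin_le_cond _ _ pS) _.
exact: bigmin_le_cond.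
Qed.

Lemma conn_extract (C : {set 'I_n}) (dl : R) : connected_at x C dl ->
  forall S : {set 'I_n}, S \subset C -> S != finset.set0 -> S != C ->
     exists p q, [/\ p \in S, q \in C, q \notin S & enorm (x p - x q) <= dl].
Proof.
move=> hc S SC S0 SnC.
apply: contrapT => hn; apply: hc.
exists S, (C :\: S); split => //.
- have : S \proper C by rewrite finset.properEneq SnC SC.
  case/properP => _ [q qC qS]; apply/set0Pn; exists q; by rewrite inE qS qC.
- apply/setP => q; rewrite !inE; case qS: (q \in S) => //=.
  by move/fintype.subsetP: SC => /(_ q qS) ->.
- by apply/setP => q; rewrite !inE; case: (q \in S).
- apply: set_dist_gt => p q pS; rewrite inE => /andP[qS qC].
  rewrite ltNge; apply/negP => hle; apply: hn; exists p, q; split => //.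
Qed.
End SD.


Section Spec.
Variables (R : realType) (n d : nat) (x : 'I_n -> 'rV[R]_d) (K : R -> R) (sigma : R).
Let W := affinity x K sigma.
Let L := laplacian x K sigma.

Lemma enormC (p q : 'I_n) : enorm (x p - x q) = enorm (x q - x p).
Proof.
rewrite /enorm; congr Num.sqrt; apply: eq_bigr => i _; rewrite !mxE.
by rewrite -opprB sqrrN.
Qed.

Lemma W_sym p q : W p q = W q p.
Proof. by rewrite /W /affinity !mxE enormC. Qed.

Lemma L_entry p q : L p q = (p == q)%:R * \sum_j W p j - W p q.
Proof.
rewrite /L /laplacian /degree_mx !mxE.
by case: eqP => _; rewrite ?mulr1n ?mulr0n ?mul1r ?mul0r.
Qed.

Lemma qform (f : 'I_n -> R) :
  \sum_p \sum_q f p * L p q * f q = 2^-1 * \sum_p \sum_q W p q * (f p - f q) ^+ 2.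
Proof.
have E1 : forall p, \sum_q f p * L p q * f q =
    \sum_q W p q * f p ^+ 2 - \sum_q W p q * (f p * f q).
  move=> p.
  have -> : \sum_q f p * L p q * f q =
     \sum_q (p == q)%:R * (f p * (\sum_j W p j) * f q) - \sum_q W p q * (f p * f q).
    rewrite -sumrB; apply: eq_bigr => q _; rewrite L_entry; ring.
  congr (_ - _).
  set dp := (\sum_j W p j).
  rewrite (bigD1 p) //= eqxx mul1r big1; last first.
    by move=> q qp; rewrite eq_sym (negbTE qp) mul0r.
  by rewrite addr0 mulr_sumr mulr_suml; apply: eq_bigr => q _; ring.
have E2 : \sum_p \sum_q W p q * f q ^+ 2 = \sum_p \sum_q W p q * f p ^+ 2.
  rewrite exchange_big /=; apply: eq_bigr => p _; apply: eq_bigr => q _.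
  by rewrite W_sym.
under eq_bigr do rewrite E1.
rewrite sumrB.
have -> : \sum_p \sum_q W p q * (f p - f q) ^+ 2 =
   \sum_p \sum_q W p q * f p ^+ 2 + \sum_p \sum_q W p q * f q ^+ 2
   - 2 * \sum_p \sum_q W p q * (f p * f q).
  rewrite -!big_split /= mulr_sumr -sumrB; apply: eq_bigr => p _.
  rewrite -big_split /= mulr_sumr -sumrB; apply: eq_bigr => q _; ring.
rewrite E2; lra.
Qed.


Variables (U : 'M[R]_n) (ev : 'rV[R]_n).
Hypotheses (hUU : U^T *m U = 1%:M) (hLU : L *m U = U *m diag_mx ev).

Lemma UUt : U *m U^T = 1%:M.
Proof. exact: mulmx1C. Qed.

Lemma quad_mx (M : 'M[R]_n) (f : 'I_n -> R) :
  \sum_p \sum_q f p * M p q * f q = (((\col_p f p)^T *m M) *m \col_p f p) 0 0.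
Proof.
rewrite mxE exchange_big /=; apply: eq_bigr => q _.
rewrite !mxE mulr_suml; apply: eq_bigr => p _; by rewrite !mxE.
Qed.

Lemma spec (f : 'I_n -> R) :
  \sum_p \sum_q f p * L p q * f q = \sum_c ev 0 c * (\sum_p U p c * f p) ^+ 2.
Proof.
rewrite quad_mx.
set v := \col_p f p.
have hL : L = U *m diag_mx ev *m U^T by rewrite -hLU -mulmxA UUt mulmx1.
have -> : v^T *m L *m v = (U^T *m v)^T *m diag_mx ev *m (U^T *m v).
  by rewrite hL trmx_mul trmxK !mulmxA.
rewrite mxE; apply: eq_bigr => c _.
rewrite mul_mx_diag !mxE.
have -> : \sum_j U^T c j * v j 0 = \sum_p U p c * f p.
  by apply: eq_bigr => p _; rewrite !mxE.
rewrite expr2; ring.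
Qed.

Lemma normp (f : 'I_n -> R) :
  \sum_p f p ^+ 2 = \sum_c (\sum_p U p c * f p) ^+ 2.
Proof.
set v := \col_p f p.
have h1 : \sum_p f p ^+ 2 = (v^T *m v) 0 0.
  by rewrite mxE; apply: eq_bigr => p _; rewrite !mxE expr2.
rewrite h1.
have -> : v^T *m v = (U^T *m v)^T *m (U^T *m v).
  by rewrite trmx_mul trmxK mulmxA -(mulmxA v^T) UUt mulmx1.
rewrite mxE; apply: eq_bigr => c _.
rewrite !mxE.
have -> : \sum_j U^T c j * v j 0 = \sum_p U p c * f p.
  by apply: eq_bigr => p _; rewrite !mxE.
by rewrite expr2.
Qed.

Lemma evq c : \sum_p \sum_q U p c * L p q * U q c = ev 0 c.
Proof.
have hd : forall c', \sum_p U p c' * U p c = (c' == c)%:R.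
  move=> c'; have : (U^T *m U) c' c = (c' == c)%:R by rewrite hUU mxE.
  by rewrite mxE => <-; apply: eq_bigr => p _; rewrite mxE.
rewrite spec; under eq_bigr do rewrite hd.
rewrite (bigD1 c) //= eqxx big1 ?addr0; first by rewrite expr1n mulr1.
by move=> c' hc'; rewrite (negbTE hc') expr2 !mulr0.
Qed.

Lemma rowU p : \sum_c U p c ^+ 2 = 1.
Proof.
have h : (U *m U^T) p p = 1 by rewrite UUt mxE eqxx.
by rewrite -h mxE; apply: eq_bigr => c _; rewrite mxE expr2.
Qed.

Lemma rowU_orth p q : p != q -> \sum_c U p c * U q c = 0.
Proof.
move=> pq; have h : (U *m U^T) p q = 0 by rewrite UUt mxE (negbTE pq).
apply: eq_trans _ h; rewrite mxE; apply: eq_bigr => c _; by rewrite mxE.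
Qed.

End Spec.


Section TrL.
Variable R : realType.
Lemma tr_sq_comm k (A B : 'M[R]_k) :
  \tr ((A *m B - 1%:M) *m (A *m B - 1%:M)) = \tr ((B *m A - 1%:M) *m (B *m A - 1%:M)).
Proof.
rewrite !mulmxBl !mulmxBr !mul1mx !mulmx1 !raddfB /=.
have -> : \tr (A *m B *m (A *m B)) = \tr (B *m A *m (B *m A)).
  by rewrite -!mulmxA mxtrace_mulC -!mulmxA.
by rewrite (mxtrace_mulC A B).
Qed.
End TrL.

Section LemA.
Variables (R : realType) (n k : nat) (U : 'M[R]_n) (lab : 'I_n -> 'I_k).
Hypotheses (hkn : (k <= n)%N) (hUU : U^T *m U = 1%:M)
  (hsurj : forall l, exists p, lab p = l).
Let w := widen_ord hkn.
Let Uk : 'M[R]_(n, k) := \matrix_(p, c) U p (w c).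

Lemma Uk_orth : Uk^T *m Uk = 1%:M.
Proof.
apply/matrixP => c c'; rewrite !mxE.
have : (U^T *m U) (w c) (w c') = (w c == w c')%:R by rewrite hUU mxE.
rewrite mxE => h.
have -> : (c == c') = (w c == w c') by [].
rewrite -h; apply: eq_bigr => p _; by rewrite !mxE.
Qed.

Lemma Uk_row p : \sum_c Uk p c ^+ 2 <= 1.
Proof.
have h1 : (U *m U^T) p p = 1 by rewrite (mulmx1C hUU) mxE eqxx.
have -> : \sum_c Uk p c ^+ 2 = \sum_(c < n | (c < k)%N) U p c ^+ 2.
  by rewrite (big_ord_narrow hkn); apply: eq_bigr => c _; rewrite mxE.
apply: (@le_trans _ _ (\sum_c U p c ^+ 2)).
  rewrite [X in _ <= X](bigID (fun c : 'I_n => (c < k)%N)) /= lerDl.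
  by apply: sumr_ge0 => c _; apply: sqr_ge0.
by rewrite -h1 mxE le_eqVlt; apply/orP; left; apply/eqP; apply: eq_bigr => c _; rewrite mxE expr2.
Qed.


Lemma lemA (rho2 : R) :
  (forall p q, lab p = lab q -> \sum_c (Uk p c - Uk q c) ^+ 2 <= rho2) ->
  4 * n%:R ^+ 2 * rho2 <= 16^-1 ->
  forall i j, lab i != lab j -> 2 / n%:R <= \sum_c (Uk i c - Uk j c) ^+ 2.
Proof.
move=> hrho hsmall i j hij.
pose rep l := if l == lab i then i else if l == lab j then j
              else odflt i [pick p | lab p == l].
have labrep l : lab (rep l) = l.
  rewrite /rep; case: eqP => [->//|_]; case: eqP => [->//|_].
  case: pickP => [p /eqP //| h]; exfalso; have [p hp] := hsurj l.
  by move: (h p); rewrite hp eqxx.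
have repi : rep (lab i) = i by rewrite /rep eqxx.
have hji : (lab j == lab i) = false by rewrite eq_sym (negbTE hij).
have repj : rep (lab j) = j by rewrite /rep hji eqxx.
pose H : 'M[R]_(n, k) := \matrix_(p, a) ((lab p == a)%:R : R).
pose M : 'M[R]_k := \matrix_(a, c) Uk (rep a) c.
pose X := H *m M.
have XE p c : X p c = Uk (rep (lab p)) c.
  rewrite mxE (bigD1 (lab p)) //= big1 ?addr0.
    by rewrite !mxE eqxx mul1r.
  by move=> a ha; rewrite !mxE eq_sym (negbTE ha) mul0r.
pose s a := \sum_p ((lab p == a)%:R : R).
pose Dm := H^T *m H.
have DmE a b : Dm a b = (a == b)%:R * s a.
  rewrite mxE /s mulr_sumr; apply: eq_bigr => p _; rewrite !mxE.
  have [<-|hab] := eqVneq a b.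
    by case: (lab p == a); rewrite /= ?mul1r ?mulr1 ?mul0r ?mulr0.
  case: (lab p =P a) => [->|_]; first by rewrite (negbTE hab) /= mulr0 mul0r.
  by rewrite /= !mul0r.
pose g a b := \sum_c M a c * M b c.
pose Y := Dm *m M *m M^T - 1%:M.
have YE a b : Y a b = s a * g a b - (a == b)%:R.
  rewrite !mxE; congr (_ - _); rewrite /g mulr_sumr; apply: eq_bigr => c _.
  rewrite !mxE (bigD1 a) //= big1 ?addr0.
    by rewrite DmE eqxx mul1r /M /Uk !mxE mulrA.
  by move=> a' ha'; rewrite DmE eq_sym (negbTE ha') mul0r mul0r.
pose F := M^T *m (Dm *m M) - 1%:M.
have trE : \tr (Y *m Y) = \tr (F *m F) by rewrite /Y /F tr_sq_comm.
pose E p c := X p c - Uk p c.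
have FE c c' : F c c' = \sum_p E p c * X p c' + \sum_p Uk p c * E p c'.
  rewrite /F.
  have -> : M^T *m (Dm *m M) = X^T *m X by rewrite /X trmx_mul /Dm !mulmxA.
  have h1 : (c == c')%:R = \sum_p Uk p c * Uk p c'.
    have := Uk_orth; move/matrixP => /(_ c c'); rewrite !mxE => <-.
    by apply: eq_bigr => p _; rewrite !mxE.
  rewrite !mxE h1 -big_split /= -sumrB; apply: eq_bigr => p _.
  rewrite [X^T c p]mxE /E; ring.
have Fsym c c' : F c' c = F c c'.
  rewrite !FE -!big_split /=; apply: eq_bigr => p _; rewrite /E; ring.
have hE : \sum_c \sum_p E p c ^+ 2 <= n%:R * rho2.
  rewrite exchange_big /=.
  have -> : n%:R * rho2 = \sum_(p < n) rho2 by rewrite sumr_const card_ord mulr_natl.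
  apply: ler_sum => p _.
  have := hrho (rep (lab p)) p (labrep _).
  by rewrite /E; under eq_bigr do rewrite XE.
have hX : \sum_c \sum_p X p c ^+ 2 <= n%:R.
  rewrite exchange_big /=.
  have -> : n%:R = \sum_(p < n) (1 : R) by rewrite sumr_const card_ord.
  apply: ler_sum => p _; under eq_bigr do rewrite XE; exact: Uk_row.
have hU : \sum_c \sum_p Uk p c ^+ 2 <= n%:R.
  rewrite exchange_big /=.
  have -> : n%:R = \sum_(p < n) (1 : R) by rewrite sumr_const card_ord.
  apply: ler_sum => p _; exact: Uk_row.
have hE0 : 0 <= \sum_c \sum_p E p c ^+ 2.
  by apply: sumr_ge0 => c _; apply: sumr_ge0 => p _; apply: sqr_ge0.
have hX0 : 0 <= \sum_c \sum_p X p c ^+ 2.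
  by apply: sumr_ge0 => c _; apply: sumr_ge0 => p _; apply: sqr_ge0.
have hU0 : 0 <= \sum_c \sum_p Uk p c ^+ 2.
  by apply: sumr_ge0 => c _; apply: sumr_ge0 => p _; apply: sqr_ge0.
have trF : \tr (F *m F) <= 4 * n%:R ^+ 2 * rho2.
  have -> : \tr (F *m F) = \sum_c \sum_c' F c c' ^+ 2.
    rewrite /mxtrace; apply: eq_bigr => c _; rewrite mxE; apply: eq_bigr => c' _.
    by rewrite Fsym expr2.
  apply: (@le_trans _ _ (\sum_c \sum_c' (2 * ((\sum_p E p c ^+ 2) * (\sum_p X p c' ^+ 2))
              + 2 * ((\sum_p Uk p c ^+ 2) * (\sum_p E p c' ^+ 2))))).
    apply: ler_sum => c _; apply: ler_sum => c' _.
    rewrite FE.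
    have h1 := @cs_ineq R _ (fun p => E p c) (fun p => X p c').
    have h2 := @cs_ineq R _ (fun p => Uk p c) (fun p => E p c').
    set a := \sum_p E p c * X p c' in h1 *; set b := \sum_p Uk p c * E p c' in h2 *.
    have : (a + b) ^+ 2 <= 2 * a ^+ 2 + 2 * b ^+ 2.
      have := sqr_ge0 (a - b); rewrite !expr2; lra.
    move=> h3; simpl in h1, h2; lra.
  set A := \sum_c \sum_p E p c ^+ 2 in hE hE0 *.
  set B := \sum_c \sum_p X p c ^+ 2 in hX hX0 *.
  set C := \sum_c \sum_p Uk p c ^+ 2 in hU hU0 *.
  have -> : \sum_c \sum_c' (2 * ((\sum_p E p c ^+ 2) * (\sum_p X p c' ^+ 2))
              + 2 * ((\sum_p Uk p c ^+ 2) * (\sum_p E p c' ^+ 2))) =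
            2 * (A * B) + 2 * (C * A).
    rewrite /A /B /C !big_distrlr /= !mulr_sumr -big_split /=.
    apply: eq_bigr => c _; rewrite !mulr_sumr -big_split /=.
    by apply: eq_bigr => c' _.
  have e1 : A * B <= (n%:R * rho2) * n%:R by apply: ler_pM.
  have e2 : C * A <= n%:R * (n%:R * rho2) by apply: ler_pM.
  have -> : 4 * n%:R ^+ 2 * rho2 = 2 * ((n%:R * rho2) * n%:R) + 2 * (n%:R * (n%:R * rho2)).
    by rewrite expr2; ring.
  lra.
have trY : \tr (Y *m Y) = \sum_a \sum_b (Y a b * Y b a).
  by rewrite /mxtrace; apply: eq_bigr => a _; rewrite mxE.
have gsym a b : g a b = g b a by apply: eq_bigr => c _; rewrite mulrC.
have s0 a : 0 <= s a by apply: sumr_ge0 => p _; rewrite ler0n.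
have T0 a b : 0 <= Y a b * Y b a.
  rewrite !YE (gsym b a); have [<-|hab] := eqVneq a b.
    by rewrite -expr2 sqr_ge0.
  rewrite /= !subr0.
  have : 0 <= s a * s b * (g a b) ^+ 2 by apply: mulr_ge0; [apply: mulr_ge0|apply: sqr_ge0].
  by have -> : s a * g a b * (s b * g a b) = s a * s b * g a b ^+ 2 by ring.
have Tle a b : Y a b * Y b a <= 4 * n%:R ^+ 2 * rho2.
  apply: le_trans trF; rewrite -trE trY.
  exact: (@one_term_le R _ _ (fun a b => Y a b * Y b a) a b T0).
set a := lab i; set b := lab j.
have Mi c : M a c = Uk i c by rewrite mxE repi.
have Mj c : M b c = Uk j c by rewrite mxE repj.
set G := \sum_c Uk i c * Uk i c.
set Hh := \sum_c Uk j c * Uk j c.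
set P := \sum_c Uk i c * Uk j c.
have gaa : g a a = G by apply: eq_bigr => c _; rewrite !Mi.
have gbb : g b b = Hh by apply: eq_bigr => c _; rewrite !Mj.
have gab : g a b = P by apply: eq_bigr => c _; rewrite Mi Mj.
have gba : g b a = P by rewrite gsym.
have hab : (a == b) = false by apply/negbTE.
have hba : (b == a) = false by rewrite eq_sym.
have t1 := Tle a a; have t2 := Tle b b; have t3 := Tle a b.
rewrite !YE gaa eqxx /= in t1.
rewrite !YE gbb eqxx /= in t2.
rewrite !YE gab gba hab hba /= !subr0 in t3.
have hQ : \sum_c (Uk i c - Uk j c) ^+ 2 = G + Hh - 2 * P.
  rewrite /G /Hh /P mulr_sumr -!big_split /= -sumrB; apply: eq_bigr => c _; ring.
have hQ0 : 0 <= \sum_c (Uk i c - Uk j c) ^+ 2 by apply: sumr_ge0 => c _; apply: sqr_ge0.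
rewrite hQ in hQ0 *.
have sa1 : 1 <= s a.
  rewrite /s (bigD1 i) //= eqxx lerDl; apply: sumr_ge0 => *; exact: ler0n.
have sb1 : 1 <= s b.
  rewrite /s (bigD1 j) //= eqxx lerDl; apply: sumr_ge0 => *; exact: ler0n.
have sab : s a + s b <= n%:R.
  have -> : n%:R = \sum_(p < n) (1 : R) by rewrite sumr_const card_ord.
  rewrite /s -big_split /=; apply: ler_sum => p _.
  case: (lab p =P a) => [->|_]; first by rewrite hab /= addr0.
  by case: (lab p == b); rewrite /= ?add0r ?addr0 ?ler01.
set u := s a in sa1 sab t1 t2 t3; set v := s b in sb1 sab t1 t2 t3.
set N := n%:R in sab hsmall *.
have small := hsmall.
have t1' : (u * G - 1) ^+ 2 <= 16^-1 by rewrite expr2; lra.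
have t2' : (v * Hh - 1) ^+ 2 <= 16^-1 by rewrite expr2; lra.
have t3' : u * v * P ^+ 2 <= 16^-1 by rewrite expr2; nra.
have uG : 3 / 4 <= u * G by nra.
have vH : 3 / 4 <= v * Hh by nra.
have uvP : 8 * u * v * P <= u + v.
  have h64 : (8 * u * v * P) ^+ 2 <= (u + v) ^+ 2.
    have : (8 * u * v * P) ^+ 2 = 64 * (u * v) * (u * v * P ^+ 2) by ring.
    move=> ->; have : 0 <= u * v by nra.
    have : 4 * (u * v) <= (u + v) ^+ 2 by have := sqr_ge0 (u - v); rewrite !expr2; lra.
    nra.
  have : 0 <= u + v by lra.
  nra.
have key : (u + v) / 2 <= u * v * (G + Hh - 2 * P) by nra.
have Npos : 0 < N by lra.
rewrite ler_pdivrMr //.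
have : 2 <= (u + v) * (G + Hh - 2 * P).
  have huv : 0 < u * v by nra.
  have : 4 * (u * v) <= (u + v) ^+ 2 by have := sqr_ge0 (u - v); rewrite !expr2; lra.
  nra.
nra.
Qed.

End LemA.


Section CB.
Variables (R : realType) (n d k : nat) (x : 'I_n -> 'rV[R]_d) (K : R -> R) (sigma : R)
  (U : 'M[R]_n) (ev : 'rV[R]_n) (lab : 'I_n -> 'I_k) (deltas : 'I_k -> R) (w eps : R).
Let W := affinity x K sigma.
Hypotheses (hUU : U^T *m U = 1%:M) (hLU : laplacian x K sigma *m U = U *m diag_mx ev)
  (hev : forall i j : 'I_n, (i <= j)%N -> ev 0 i <= ev 0 j)
  (hw : 0 < w) (heps : 0 <= eps) (hkn : (k <= n)%N) (hk : (0 < k)%N)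
  (hsurj : forall l, exists p, lab p = l)
  (W0 : forall p q, 0 <= W p q)
  (Hcross : forall p q, lab p != lab q -> W p q <= eps * w)
  (Hedge : forall p q, lab p = lab q -> enorm (x p - x q) <= deltas (lab p) -> w <= W p q)
  (Hconn : forall l, connected_at x (finset [pred i | lab i == l]) (deltas l)).

Fact hck : (k.-1 < n)%N.
Proof. by rewrite /leq /= prednK. Qed.
Let ck : 'I_n := Ordinal hck.

Lemma ev_ck_bound : ev 0 ck <= n%:R * eps * w.
Proof.
have hkn1 : (k.-1 <= n)%N by rewrite (leq_trans (leq_pred k)).
pose B : 'M[R]_(k, k.-1) :=
  \matrix_(l, c) \sum_p ((lab p == l)%:R * U p (widen_ord hkn1 c)).
have hk1 : (k.-1 < k)%N by rewrite prednK.
have [a [a0 aB]] := @exists_ker R k k.-1 B hk1.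
pose f p := a 0 (lab p).
have yz (c : 'I_n) : (c < k.-1)%N -> \sum_p U p c * f p = 0.
  move=> hc.
  have h0 := aB; move/matrixP: h0 => /(_ 0 (Ordinal hc)); rewrite !mxE => h0.
  apply: (eq_trans _ h0).
  have hwc : widen_ord hkn1 (Ordinal hc) = c by apply: val_inj.
  under [RHS]eq_bigr do rewrite mxE mulr_sumr.
  rewrite hwc.
  rewrite exchange_big /=; apply: eq_bigr => p _.
  rewrite /f (bigD1 (lab p)) //= eqxx mul1r big1 ?addr0; first by rewrite mulrC.
  by move=> l hl; rewrite eq_sym (negbTE hl) mul0r mulr0.
have Sf : 0 < \sum_p f p ^+ 2.
  have [l hl] : exists l, a 0 l != 0.
    case: (boolP [exists l, a 0 l != 0]) => [/existsP //|].
    rewrite negb_exists => /forallP h; exfalso.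
    move/negP: a0; apply; apply/eqP/rowP => l; rewrite mxE.
    by move: (h l); rewrite negbK => /eqP.
  have [p hp] := hsurj l.
  rewrite (bigD1 p) //= ltr_pwDl //.
    by rewrite /f hp lt_def sqrf_eq0 hl /= sqr_ge0.
  by apply: sumr_ge0 => *; apply: sqr_ge0.
have lower : ev 0 ck * \sum_p f p ^+ 2 <=
    \sum_p \sum_q f p * laplacian x K sigma p q * f q.
  rewrite (@spec _ _ _ x K sigma U ev hUU hLU) (@normp _ _ U hUU) mulr_sumr; apply: ler_sum => c _.
  have [hc|hc] := ltnP c k.-1; first by rewrite yz // expr0n /= !mulr0.
  apply: ler_wpM2r; first exact: sqr_ge0.
  by apply: hev.
have upper : \sum_p \sum_q f p * laplacian x K sigma p q * f q <=
    n%:R * eps * w * \sum_p f p ^+ 2.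
  rewrite qform.
  have h1 : \sum_p \sum_q W p q * (f p - f q) ^+ 2 <=
            eps * w * \sum_p \sum_q (f p - f q) ^+ 2.
    rewrite mulr_sumr; apply: ler_sum => p _; rewrite mulr_sumr; apply: ler_sum => q _.
    have [hpq|hpq] := eqVneq (lab p) (lab q).
      by rewrite /f hpq subrr expr0n /= !mulr0.
    by apply: ler_wpM2r; [apply: sqr_ge0| apply: Hcross].
  have h2 : \sum_p \sum_q (f p - f q) ^+ 2 =
            2 * n%:R * \sum_p f p ^+ 2 - 2 * (\sum_p f p) ^+ 2.
    have -> : \sum_(p < n) \sum_(q < n) (f p - f q) ^+ 2 =
       \sum_(p < n) \sum_(q < n) (f p ^+ 2) + \sum_(p < n) \sum_(q < n) (f q ^+ 2)
       - 2 * \sum_(p < n) \sum_(q < n) (f p * f q).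
      rewrite -!big_split /= mulr_sumr -sumrB; apply: eq_bigr => p _.
      rewrite -big_split /= mulr_sumr -sumrB; apply: eq_bigr => q _; ring.
    rewrite exchange_big /= -big_distrlr /= expr2.
    rewrite !sum_cst_ord; ring.
  have h3 : 0 <= (\sum_p f p) ^+ 2 by apply: sqr_ge0.
  have hew : 0 <= eps * w by apply: mulr_ge0 => //; apply: ltW.
  rewrite h2 in h1.
  have : 2^-1 * \sum_p \sum_q W p q * (f p - f q) ^+ 2 <=
         2^-1 * (eps * w * (2 * n%:R * \sum_p f p ^+ 2)).
    apply: ler_wpM2l; first by rewrite invr_ge0.
    apply: (le_trans h1); apply: ler_wpM2l => //; lra.
  move=> h4; apply: (le_trans h4); lra.
have := le_trans lower upper.
by rewrite ler_pM2r.
Qed.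


Lemma coord_bound p q (c : 'I_n) : lab p = lab q -> (c < k)%N ->
  (U p c - U q c) ^+ 2 <= (n.-1)%:R ^+ 2 * (n%:R * eps).
Proof.
move=> hpq hc.
have evc : ev 0 c <= n%:R * eps * w.
  apply: le_trans ev_ck_bound; apply: hev => /=.
  by rewrite -ltnS prednK.
have hne : 0 <= n%:R * eps by apply: mulr_ge0.
set eta := Num.sqrt (n%:R * eps).
have edge : forall a b, lab a = lab b -> enorm (x a - x b) <= deltas (lab a) ->
    `|U a c - U b c| <= eta.
  move=> a b hab hd.
  have [->|ab] := eqVneq a b; first by rewrite subrr normr0 sqrtr_ge0.
  have T0 : forall i j, 0 <= W i j * (U i c - U j c) ^+ 2.
    by move=> i j; apply: mulr_ge0 => //; apply: sqr_ge0.
  have h2 := @two_terms_le R n (fun i j => W i j * (U i c - U j c) ^+ 2) a b T0 ab.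
  have hq := @qform R n d x K sigma (fun i => U i c).
  rewrite (@evq _ _ _ x K sigma U ev hUU hLU) in hq.
  rewrite /= (@W_sym _ _ _ x K sigma b a) in h2.
  have hsq : (U b c - U a c) ^+ 2 = (U a c - U b c) ^+ 2 by rewrite -opprB sqrrN.
  rewrite hsq in h2.
  have hWab : w <= W a b := Hedge a b hab hd.
  have hd2 : w * (U a c - U b c) ^+ 2 <= n%:R * eps * w.
    apply: le_trans evc; rewrite hq.
    have := sqr_ge0 (U a c - U b c).
    rewrite /W in h2 hWab |- *.
    move=> hs; nra.
  have hd3 : (U a c - U b c) ^+ 2 <= n%:R * eps.
    rewrite -(ler_pM2l hw); apply: (le_trans hd2).
    by rewrite [w * (_ * _)]mulrC.
  by rewrite -sqrtr_sqr; apply: ler_wsqrtr.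
set C := finset [pred i | lab i == lab p].
have pC : p \in C by rewrite inE /=.
have qC : q \in C by rewrite inE /= hpq.
have hb := @path_bound R n C (fun a b => enorm (x a - x b) <= deltas (lab p))
  (fun i => U i c) eta (sqrtr_ge0 _) (@conn_extract R n d x _ _ (Hconn (lab p))).
have hE : forall a b, a \in C -> b \in C ->
    enorm (x a - x b) <= deltas (lab p) -> `|U a c - U b c| <= eta.
  move=> a b; rewrite !inE /= => /eqP ha /eqP hb2 hd.
  by apply: edge; [rewrite ha hb2| rewrite ha].
have hb' := hb hE p q pC qC.
have hcard : (#|C|.-1 <= n.-1)%N.
  have : (#|C| <= n)%N by have := max_card C; rewrite card_ord.
  by rewrite -!subn1; apply: leq_sub2r.
have hcr : (#|C|.-1)%:R <= (n.-1)%:R :> R by rewrite ler_nat.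
have heta : eta ^+ 2 = n%:R * eps by rewrite sqr_sqrtr.
have hb3 : `|U p c - U q c| <= (n.-1)%:R * eta.
  apply: (le_trans hb'); apply: ler_wpM2r => //; exact: sqrtr_ge0.
rewrite -heta -exprMn -real_normK ?num_real //.
apply: lerXn2r => //; rewrite ?nnegrE ?normr_ge0 //.
by apply: mulr_ge0; [rewrite ler0n|apply: sqrtr_ge0].
Qed.

End CB.


Theorem lemma12 (R : realType) (K : R -> R) (A alpha : R) (d n k : nat)
  (x : 'I_n -> 'rV[R]_d) (lab : 'I_n -> 'I_k) (deltas : 'I_k -> R)
  (delta : \bar R) (sigma z : R) (U : 'M[R]_n) :
  AK1 K -> AK2 d K -> AK3 K A alpha ->
  injective x ->
  (forall l : 'I_k, exists i : 'I_n, lab i = l) ->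
  (forall l : 'I_k, connected_at x (finset [pred i | lab i == l]) (deltas l)) ->
  delta = (\big[Order.min/+oo%E]_(m < k)
              set_dist x (finset [pred i | lab i == m]) (finset [pred i | lab i != m])
           - \big[Order.max/-oo%E]_(l < k) (deltas l)%:E)%E ->
  (0 < delta)%E ->
  (n%:R `^ (z - 15) >= 81 * k%:R ^+ 15) ->
  0 < sigma ->
  (sigma%:E < delta * (ln (A * n%:R `^ (z / 3)) `^ (- alpha^-1))%:E)%E ->
  eigvec_matrix (laplacian x K sigma) U ->
  (forall i j : 'I_n, lab i = lab j ->
     row_dist U k i j <= (k%:R ^+ 3 / n%:R `^ (z - 9)) `^ (6^-1)) /\
  (forall i j : 'I_n, lab i != lab j ->
     row_dist U k i j >= Num.sqrt (2 / n%:R)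
                         - 6 * (k%:R ^+ 27 / n%:R `^ (z - 15)) `^ (24^-1)).
Proof.
move=> [K_mono K_pos] [K0 _] [A0 [alpha0 hK3]] _ hsurj hconn hdelta hdelta0 hnz hsig hsigma.
case=> ev [hUU hLU hev].
have [n0|npos] := posnP n.
  by split => i; have := ltn_ord i; rewrite {2}n0.
have hk : (0 < k)%N by case: (lab (Ordinal npos)) => m hm; apply: leq_ltn_trans hm.
have hkn : (k <= n)%N.
  have := leq_imset_card lab [set: 'I_n]; rewrite cardsT !card_ord.
  move=> h; apply: leq_trans h.
  rewrite -[k in (k <= _)%N]card_ord -cardsT; apply: subset_leq_card.
  apply/fintype.subsetP => l _; have [p hp] := hsurj l.
  by apply/imsetP; exists p; rewrite ?inE.
set N := n%:R : R.
have k1 : 1 <= k%:R :> R by rewrite ler1n.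
have hn2 : (2 <= n)%N.
  rewrite ltnNge; apply/negP => h2.
  have n1 : n = 1%N by lia.
  move: hnz; rewrite n1 powR1 => h.
  have : 1 <= k%:R ^+ 15 :> R by rewrite exprn_ege1.
  lra.
have N2 : 2 <= N by rewrite /N ler_nat.
have N0 : 0 <= N by lra.
have hz : 15 < z.
  rewrite ltNge; apply/negP => hz.
  have : N `^ (z - 15) <= N `^ 0 by apply: ler_powR; lra.
  rewrite powRr0 => h.
  have : 1 <= k%:R ^+ 15 :> R by rewrite exprn_ege1.
  lra.
have hA1 : 1 <= A.
  have := hK3 0 0 (lexx 0) (lexx 0).
  rewrite K0 divr1 subrr powR0 ?oppr0 ?expR0 ?mulr1 //.
  by apply/eqP => h; move: alpha0; rewrite h ltxx.
set P3 := N `^ (z / 3).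
have hP3 : 2 <= P3.
  apply: (le_trans N2 _); rewrite -{1}(powRr1 N0); apply: ler_powR; first lra.
  rewrite ler_pdivlMr; lra.
set ell := ln (A * P3).
have hell : 0 < ell by apply: ln_gt0; nra.
set eps := P3^-1.
have heps : 0 < eps by rewrite invr_gt0; lra.
have hexp : A * expR (- ell) = eps.
  rewrite expRN lnK; last by rewrite posrE; nra.
  rewrite /eps invfM mulrA mulfV ?mul1r //; lra.
set MAX := \big[Order.max/-oo%E]_(l < k) (deltas l)%:E.
have hMAXlb l : ((deltas l)%:E <= MAX)%E by apply: le_bigmax.
have hMAXfin : MAX \is a fin_num.
  apply: fin_real; apply/andP; split.
    apply: lt_le_trans (hMAXlb (Ordinal hk)); exact: ltNyr.
  apply: le_lt_trans (ltry (\sum_l `|deltas l|)).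
  apply: bigmax_le; first exact: leNye.
  move=> l _; rewrite lee_fin.
  apply: le_trans (ler_norm _) _.
  rewrite (bigD1 l) //= lerDl; apply: sumr_ge0 => *; exact: normr_ge0.
set dm := fine MAX.
have hMAX : MAX = dm%:E by rewrite fineK.
have hdm l : deltas l <= dm by have := hMAXlb l; rewrite hMAX lee_fin.
set r := ell `^ (- alpha^-1).
have hcrossd : forall p q, lab p != lab q -> exists d0,
    [/\ delta = d0%:E, 0 < d0, sigma < d0 * r & d0 + dm <= enorm (x p - x q)].
  move=> p q hpq.
  have hle : (delta <= (enorm (x p - x q) - dm)%:E)%E.
    rewrite hdelta -/MAX hMAX EFinB; apply: leeB => //.
    have h1 := @bigmin_le _ _ 'I_k (+oo%E) (lab p) (fun m => set_dist x (finset [pred i | lab i == m]) (finset [pred i | lab i != m])).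
    apply: (le_trans h1).
    by apply: (@set_dist_le R n d x _ _ p q); rewrite inE /= ?eqxx // eq_sym.
  have hdfin : delta \is a fin_num.
    apply: fin_real; apply/andP; split; last exact: le_lt_trans hle (ltry _).
    exact: lt_trans (ltNyr 0) hdelta0.
  exists (fine delta); split; first by rewrite fineK.
  - by rewrite -lte_fin fineK.
  - by rewrite -lte_fin EFinM fineK.
  - by move: hle; rewrite -{1}(fineK hdfin) lee_fin; lra.
set rho2 := k%:R * N ^+ 3 * eps.
have rho0 : 0 <= rho2.
  by apply: mulr_ge0; [apply: mulr_ge0; [rewrite ler0n|apply: exprn_ge0]|apply: ltW].
have hrho : forall p q, lab p = lab q ->
    \sum_(c < k) (U p (widen_ord hkn c) - U q (widen_ord hkn c)) ^+ 2 <= rho2.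
  have [dmneg|dmpos] := ltP dm 0.
    move=> p q hpq; have [<-|pq] := eqVneq p q.
      by rewrite big1 // => c _; rewrite subrr expr0n.
    exfalso.
    set C := finset [pred i | lab i == lab p].
    have sub : [set p] \subset C by rewrite finset.sub1set inE /=.
    have ne : [set p] != finset.set0 by apply/set0Pn; exists p; rewrite finset.in_set1.
    have neq : [set p] != C.
      apply/eqP => h; have : q \in C by rewrite inE /= hpq.
      by rewrite -h finset.in_set1 => /eqP h'; rewrite h' eqxx in pq.
    have [p' [q' [_ _ _ hd]]] := @conn_extract R n d x C (deltas (lab p)) (hconn (lab p)) [set p] sub ne neq.
    have := hdm (lab p); have : 0 <= enorm (x p' - x q') by apply: sqrtr_ge0.
    lra.
  set w := K (dm / sigma).
  have hdms : 0 <= dm / sigma by apply: divr_ge0 => //; apply: ltW.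
  have hw : 0 < w by apply: K_pos.
  have hes p q : 0 <= enorm (x p - x q) / sigma.
    by apply: divr_ge0; [apply: sqrtr_ge0|apply: ltW].
  have W0 : forall p q, 0 <= affinity x K sigma p q.
    by move=> p q; rewrite mxE; apply: ltW; apply: K_pos.
  have Hedge : forall p q, lab p = lab q -> enorm (x p - x q) <= deltas (lab p) ->
      w <= affinity x K sigma p q.
    move=> p q hpq hd; rewrite mxE; apply: K_mono => //.
    rewrite ler_pM2r ?invr_gt0 //; apply: (le_trans hd); exact: hdm.
  have Hcross : forall p q, lab p != lab q -> affinity x K sigma p q <= eps * w.
    move=> p q hpq.
    have [d0 [hd0 d0pos hsr hdd]] := hcrossd p q hpq.
    rewrite mxE; set e := enorm (x p - x q) in hdd *.
    have hy : dm / sigma <= e / sigma by rewrite ler_pM2r ?invr_gt0 //; lra.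
    have h3 := hK3 (e / sigma) (dm / sigma) hdms hy.
    set L := ell `^ (alpha^-1).
    have L0 : 0 < L by apply: powR_gt0.
    have hr : r = L^-1 by rewrite /r powRN.
    have hL : L <= e / sigma - dm / sigma.
      rewrite -mulrBl ler_pdivlMr //.
      rewrite hr in hsr.
      have : sigma * L < d0 by rewrite -ltr_pdivlMr.
      lra.
    have hell' : ell <= (e / sigma - dm / sigma) `^ alpha.
      have -> : ell = L `^ alpha.
        by rewrite /L -powRrM mulVf ?powRr1 //; [apply: ltW | apply: lt0r_neq0].
      apply: ge0_ler_powR => //; [exact: ltW| rewrite nnegrE; exact: ltW| rewrite nnegrE; lra].
    have h4 : A * expR (- (e / sigma - dm / sigma) `^ alpha) <= eps.
      rewrite -hexp; apply: ler_wpM2l; first lra.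
      by rewrite ler_expR lerN2.
    have := le_trans h3 h4.
    by rewrite ler_pdivrMr.
  move=> p q hpq.
  apply: (le_trans (ler_sum _ (fun c _ => @coord_bound R n d k x K sigma U ev lab deltas w eps
     hUU hLU hev hw (ltW heps) hkn hk hsurj W0 Hcross Hedge hconn p q (widen_ord hkn c) hpq (ltn_ord c)))).
  rewrite sum_cst_ord /rho2.
  have hn1 : (n.-1)%:R <= N by rewrite /N ler_nat leq_pred.
  have hn10 : 0 <= (n.-1)%:R :> R by rewrite ler0n.
  have hsq : (n.-1)%:R ^+ 2 <= N ^+ 2 :> R by rewrite lerXn2r ?nnegrE.
  have : (n.-1)%:R ^+ 2 * (N * eps) <= N ^+ 2 * (N * eps).
    by apply: ler_wpM2r => //; apply: mulr_ge0 => //; apply: ltW.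
  have k0 : 0 <= k%:R :> R by rewrite ler0n.
  move=> h; have := ler_wpM2l k0 h.
  by rewrite !exprS expr0 !mulr1 !mulrA.
have rdE i j : row_dist U k i j =
    Num.sqrt (\sum_(c < k) (U i (widen_ord hkn c) - U j (widen_ord hkn c)) ^+ 2).
  by rewrite /row_dist (big_ord_narrow hkn).
have Npos : 0 < N by lra.
have P3_3 : P3 ^+ 3 = N `^ z.
  rewrite /P3 -powR_mulrn ?powR_ge0 // -powRrM.
  by congr (N `^ _); field.
have Nz0 : 0 < N `^ z by apply: powR_gt0.
have hepsz : eps ^+ 3 = (N `^ z)^-1 by rewrite /eps exprVn P3_3.
have pwB (m : nat) : N `^ (z - m%:R) = N `^ z / N ^+ m.
  rewrite powRB; last by apply/implyP => _; lra.
  by rewrite powR_mulrn.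
split.
  move=> i j hij; rewrite rdE.
  set q1 := k%:R ^+ 3 / N `^ (z - 9).
  have hq1 : q1 = rho2 ^+ 3.
    rewrite /q1 (pwB 9%N) /rho2 !exprMn hepsz.
    field; apply/andP; split; lra.
  have ht : q1 `^ (6^-1) = rho2 `^ (2^-1).
    by rewrite hq1 -powR_mulrn // -powRrM; congr (_ `^ _); field.
  have ht2 : (rho2 `^ (2^-1)) ^+ 2 = rho2.
    by rewrite -powR_mulrn ?powR_ge0 // -powRrM mulVf ?powRr1 //; lra.
  rewrite ht -(ger0_norm (powR_ge0 rho2 (2^-1))) -sqrtr_sqr ht2.
  by apply: ler_wsqrtr; apply: hrho.
move=> i j hij; rewrite rdE.
have hrho' : forall p q, lab p = lab q ->
    \sum_c ((\matrix_(p0, c0) U p0 (widen_ord hkn c0)) p c -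
            (\matrix_(p0, c0) U p0 (widen_ord hkn c0)) q c) ^+ 2 <= rho2.
  by move=> p q hpq; under eq_bigr do rewrite !mxE; apply: hrho.
set B := k%:R ^+ 27 / N `^ (z - 15).
have B0 : 0 <= B by apply: divr_ge0; [apply: exprn_ge0; rewrite ler0n| apply: powR_ge0].
set beta := B `^ (24^-1).
have beta0 : 0 <= beta by apply: powR_ge0.
have hS0 : 0 <= \sum_(c < k) (U i (widen_ord hkn c) - U j (widen_ord hkn c)) ^+ 2.
  by apply: sumr_ge0 => c _; apply: sqr_ge0.
case: (boolP (4 * N ^+ 2 * rho2 <= 16^-1)) => hsm.
  have h := @lemA R n k U lab hkn hUU hsurj rho2 hrho' hsm i j hij.
  have e : \sum_c ((\matrix_(p0, c0) U p0 (widen_ord hkn c0)) i c -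
            (\matrix_(p0, c0) U p0 (widen_ord hkn c0)) j c) ^+ 2 =
      \sum_(c < k) (U i (widen_ord hkn c) - U j (widen_ord hkn c)) ^+ 2.
    by apply: eq_bigr => c _; rewrite !mxE.
  rewrite e in h.
  have : Num.sqrt (2 / N) <= Num.sqrt (\sum_(c < k) (U i (widen_ord hkn c) - U j (widen_ord hkn c)) ^+ 2).
    exact: ler_wsqrtr.
  lra.
have hsm' : 16^-1 < 4 * N ^+ 2 * rho2 by rewrite ltNge.
have hB : B = k%:R ^+ 27 * N ^+ 15 * eps ^+ 3.
  rewrite /B (pwB 15%N) hepsz; field; apply/andP; split; lra.
have hbeta : beta ^+ 24 = B.
  by rewrite /beta -powR_mulrn ?powR_ge0 // -powRrM mulVf ?powRr1.
set t := 64 * k%:R * N ^+ 5 * eps.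
have ht : 1 < t.
  have : 4 * N ^+ 2 * rho2 = t / 16 by rewrite /rho2 /t; field.
  lra.
have ht3 : 1 < t ^+ 3.
  have t0 : 1 < t * t by nra.
  rewrite !exprS expr0 mulr1; nra.
have hk24 : 1 <= k%:R ^+ 24 :> R by rewrite exprn_ege1.
have hB64 : 1 <= 64 ^+ 3 * B.
  have : 64 ^+ 3 * B = k%:R ^+ 24 * t ^+ 3 by rewrite hB /t; ring.
  move=> ->; nra.
have h64 : (64^-1) ^+ 3 <= B.
  rewrite exprVn -div1r ler_pdivrMr ?exprn_gt0 // mulrC //.
have h2 : (2^-1) ^+ 24 <= (64^-1 : R) ^+ 3.
  have -> : (2^-1 : R) ^+ 24 = (64^-1) ^+ 4.
    have e6 : (2^-1 : R) ^+ 6 = 64^-1 by rewrite exprVn -natrX.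
    by rewrite (_ : 24%N = (6 * 4)%N) // exprM e6.
  apply: ler_wiXn2l => //; rewrite invf_le1; lra.
have hbeta2 : 2^-1 <= beta.
  rewrite -(ler_pXn2r (isT : (0 < 24)%N)) ?nnegrE //.
  by rewrite hbeta; apply: le_trans h2 h64.
have hsq : Num.sqrt (2 / N) <= 1.
  apply: (@le_trans _ _ (Num.sqrt 1)); last by rewrite sqrtr1.
  apply: ler_wsqrtr; rewrite ler_pdivrMr //; lra.
have := sqrtr_ge0 (\sum_(c < k) (U i (widen_ord hkn c) - U j (widen_ord hkn c)) ^+ 2).
lra.
Qed.
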